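(* Let $\pi$ be a probability distribution on $\mathbb{R}^d$ with coordinates partitioned into $s$ blocks, and for a probability vector $p=(p_1,\dots,p_s)$ with all $p_i>0$ let $\mathrm{Gap}(p)$ be the $L_2$-spectral gap of the Random Scan Gibbs Sampler RSGS($p$) for $\pi$. Then for any probability vectors $p,q$ with positive entries, $$\mathrm{Gap}(p)\le\Big(\max_{i=1,\dots,s}\frac{p_i}{q_i}\Big)\mathrm{Gap}(q);$$ in particular $\mathrm{Gap}(p)\le\big(\max_{i}sp_i\big)\,\mathrm{Gap}(1/s)$, where $\mathrm{Gap}(1/s)$ is the spectral gap of RSGS with uniform selection probabilities $(1/s,\dots,1/s)$.
   Context: RSGS($p$) is the Markov kernel $P_p=\sum_{i=1}^sp_iPr_i$, where $Pr_i$ replaces the block $x_i$ of $x=(x_1,\dots,x_s)$ by a draw from the full conditional $\pi(x_i\mid x_{-i})$. For $f\in L_2(\mathbb{R}^d,\pi)$ let $\pi(f)=\int f\,d\pi$. The $L_2$-rate of convergence $\rho(p)$ is the smallest $\rho>0$ such that for all $f\in L_2(\mathbb{R}^d,\pi)$ and $r>\rho$, $\lim_{n\to\infty}r^{-2n}\mathbb{E}_\pi[\{(P_p^nf)(x)-\pi(f)\}^2]=0$, and $\mathrm{Gap}(p)=1-\rho(p)$. *)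

(* Defs.v *)
From HB Require Import structures.
From mathcomp Require Import all_boot all_order all_algebra.
From mathcomp Require Import all_classical all_reals all_analysis.
Set Implicit Arguments. Unset Strict Implicit. Unset Printing Implicit Defensive.
Import Order.TTheory GRing.Theory Num.Theory.
Import numFieldNormedType.Exports.
Local Open Scope classical_set_scope.
Local Open Scope ring_scope.

(* State space R^d := d.-tuple R with the product (= Borel) sigma-algebra
   generated by the coordinate projections (library instance).
   Coordinates are partitioned into s blocks by blk : 'I_d -> 'I_s. *)

Definition same_off_block (R : realType) (d s : nat) (blk : 'I_d -> 'I_s)
  (i : 'I_s) (x y : d.-tuple R) : Prop :=
  forall j : 'I_d, blk j != i -> tnth y j = tnth x j.

(* A set G is sigma(x_{-i})-measurable: measurable and determined by x_{-i}. *)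
Definition block_saturated (R : realType) (d s : nat) (blk : 'I_d -> 'I_s)
  (i : 'I_s) (G : set (d.-tuple R)) : Prop :=
  measurable G /\
  forall x y, same_off_block blk i x y -> (G x <-> G y).

(* k is (a version of) the Gibbs update of block i for pi: from x it keeps
   x_{-i} and draws x_i from the full conditional pi(x_i | x_{-i}), i.e.
   k(x, .) is a regular conditional distribution of X given X_{-i}. *)
Definition full_conditional_kernel (R : realType) (d s : nat)
  (blk : 'I_d -> 'I_s) (pi : probability (d.-tuple R) R) (i : 'I_s)
  (k : R.-pker (d.-tuple R) ~> (d.-tuple R)) : Prop :=
  [/\ (forall x, k x [set y | same_off_block blk i x y] = 1%E),
      (forall x x', same_off_block blk i x x' ->
         forall A, measurable A -> k x A = k x' A) &
      (forall A G, measurable A -> block_saturated blk i G ->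
         (\int[pi]_(x in G) k x A = pi (A `&` G))%E)].

Definition pos_prob_vector (R : realType) (s : nat) (p : 'I_s -> R) : Prop :=
  (forall i, 0 < p i) /\ \sum_(i < s) p i = 1.

Definition uniform_vector (R : realType) (s : nat) : 'I_s -> R :=
  fun _ => (s%:R)^-1.

Definition rsgs_op (R : realType) (d s : nat)
  (k : 'I_s -> R.-pker (d.-tuple R) ~> (d.-tuple R)) (p : 'I_s -> R)
  (f : d.-tuple R -> R) : d.-tuple R -> R :=
  fun x => \sum_(i < s) p i * fine (\int[k i x]_y (f y)%:E)%E.

Definition pi_mean (R : realType) (d : nat) (pi : probability (d.-tuple R) R)
  (f : d.-tuple R -> R) : R := fine (\int[pi]_x (f x)%:E)%E.

Definition in_L2 (R : realType) (d : nat) (pi : probability (d.-tuple R) R)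
  (f : d.-tuple R -> R) : Prop :=
  measurable_fun setT f /\ (\int[pi]_x ((f x) ^+ 2)%:E < +oo)%E.

Definition L2_rate_ok (R : realType) (d s : nat)
  (pi : probability (d.-tuple R) R)
  (k : 'I_s -> R.-pker (d.-tuple R) ~> (d.-tuple R)) (p : 'I_s -> R)
  (rho : R) : Prop :=
  forall f, in_L2 pi f -> forall r : R, rho < r ->
    ((r ^- (2 * n))%:E *
      \int[pi]_x (((iter n (rsgs_op k p) f x - pi_mean pi f) ^+ 2)%:E))%E
      @[n --> \oo] --> 0%E.

Definition L2_rate (R : realType) (d s : nat)
  (pi : probability (d.-tuple R) R)
  (k : 'I_s -> R.-pker (d.-tuple R) ~> (d.-tuple R)) (p : 'I_s -> R) : R :=
  inf [set rho : R | 0 < rho /\ L2_rate_ok pi k p rho].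

Definition Gap (R : realType) (d s : nat)
  (pi : probability (d.-tuple R) R)
  (k : 'I_s -> R.-pker (d.-tuple R) ~> (d.-tuple R)) (p : 'I_s -> R) : R :=
  1 - L2_rate pi k p.

(* Main.v *)
Require Import Defs.
From HB Require Import structures.
From mathcomp Require Import all_boot all_order all_algebra.
From mathcomp Require Import all_classical all_reals all_analysis.
From mathcomp Require Import measurable_realfun ring lra.
Set Implicit Arguments. Unset Strict Implicit. Unset Printing Implicit Defensive.
Import Order.TTheory GRing.Theory Num.Theory.
Import numFieldNormedType.Exports.
Local Open Scope classical_set_scope.
Local Open Scope ring_scope.


Section L2gen.
Context d (T : measurableType d) (R : realType).
Variable mu : {measure set T -> \bar R}.
Hypothesis mu1 : mu setT = 1%E.

Definition L2 (f : T -> R) := measurable_fun setT f /\ (\int[mu]_x ((f x)^+2)%:E < +oo)%E.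
Definition Int (f : T -> R) := mu.-integrable setT (EFin \o f).
Definition mean (f : T -> R) := fine (\int[mu]_x (f x)%:E)%E.

Lemma Int_cst c : Int (fun _ => c).
Proof.
apply/integrableP; split; first exact: measurable_cst.
rewrite (_ : (fun x => _) = cst `|c|%:E); last by apply/funext => x.
by rewrite integral_cst // mu1 mule1 ltry.
Qed.

Lemma mean_cst c : mean (fun _ => c) = c.
Proof. by rewrite /mean (_ : (fun x => _) = cst c%:E) // integral_cst // mu1 mule1. Qed.

Lemma L2_Int2 f : L2 f -> Int (fun x => f x ^+ 2).
Proof.
move=> [mf fi]; apply/integrableP; split.
  by apply/measurable_EFinP; apply: measurable_funX.
under eq_integral => x _ do rewrite /= ger0_norm ?sqr_ge0 //.
done.
Qed.

Lemma Int_le (f g : T -> R) : measurable_fun setT f -> Int g -> (forall x, `|f x| <= g x) -> Int f.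
Proof.
move=> mf ig fg; apply: le_integrable ig => //.
  exact/measurable_EFinP.
move=> x _ /=; rewrite lee_fin (le_trans (fg x)) // ler_norm //.
Qed.

Lemma IntD (f g : T -> R) : Int f -> Int g -> Int (fun x => f x + g x).
Proof.
move=> fi gi; have := integrableD measurableT fi gi.
by apply: (eq_integrable measurableT) => x _ /=; rewrite EFinD.
Qed.

Lemma IntZ c (f : T -> R) : Int f -> Int (fun x => c * f x).
Proof.
move=> fi; have := integrableZl measurableT c fi.
by apply: (eq_integrable measurableT) => x _ /=; rewrite EFinM.
Qed.

Lemma IntN (f : T -> R) : Int f -> Int (fun x => - f x).
Proof.
move=> fi; have := IntZ (-1) fi.
by apply: (eq_integrable measurableT) => x _ /=; rewrite mulN1r.
Qed.

Lemma Int_meas (f : T -> R) : Int f -> measurable_fun setT f.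
Proof. by move=> /integrableP[/measurable_EFinP]. Qed.

Definition L2' (f : T -> R) := measurable_fun setT f /\ Int (fun x => f x ^+ 2).

Lemma L2P f : L2 f <-> L2' f.
Proof.
split => [h|[mf fi]]; first by split; [case: h|exact: L2_Int2].
split => //; move/integrableP: fi => [_]; apply: le_lt_trans.
by rewrite le_eqVlt; apply/orP; left; apply/eqP; apply: eq_integral => x _ /=; rewrite ger0_norm ?sqr_ge0.
Qed.

Lemma L2_Int (f : T -> R) : L2' f -> Int f.
Proof.
move=> [mf fi]; apply: (Int_le mf (IntD (Int_cst 1) fi)) => x.
have := normr_ge0 (f x); rewrite -[f x ^+ 2]real_normK ?num_real //; nra.
Qed.

Lemma L2_IntM (f g : T -> R) : L2' f -> L2' g -> Int (fun x => f x * g x).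
Proof.
move=> [mf fi] [mg gi]; apply: (Int_le _ (IntD fi gi)).
  exact: measurable_funM.
move=> x; rewrite normrM -[f x ^+ 2]real_normK ?num_real // -[g x ^+ 2]real_normK ?num_real //.
have := normr_ge0 (f x); have := normr_ge0 (g x); nra.
Qed.

Lemma L2D (f g : T -> R) : L2' f -> L2' g -> L2' (fun x => f x + g x).
Proof.
move=> [mf fi] [mg gi]; split; first exact: measurable_funD.
apply: (Int_le _ (IntD (IntZ 2 fi) (IntZ 2 gi))).
  by apply: measurable_funX; exact: measurable_funD.
move=> x; rewrite ger0_norm ?sqr_ge0 //; have := sqr_ge0 (f x - g x); rewrite !expr2; nra.
Qed.

Lemma L2Z c (f : T -> R) : L2' f -> L2' (fun x => c * f x).
Proof.
move=> [mf fi]; split; first exact: measurable_funM.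
have := IntZ (c ^+ 2) fi; apply: (eq_integrable measurableT) => x _ /=; congr EFin; ring.
Qed.

Lemma L2_cst c : L2' (fun _ => c).
Proof. split; [exact: measurable_cst | exact: Int_cst]. Qed.

Lemma meanD (f g : T -> R) : Int f -> Int g -> mean (fun x => f x + g x) = mean f + mean g.
Proof. by move=> fi gi; exact: (RintegralD measurableT fi gi). Qed.

Lemma meanZ c (f : T -> R) : Int f -> mean (fun x => c * f x) = c * mean f.
Proof. by move=> fi; exact: RintegralZl. Qed.

Lemma mean_ge0 (f : T -> R) : (forall x, 0 <= f x) -> 0 <= mean f.
Proof. by move=> f0; exact: Rintegral_ge0. Qed.

Lemma mean_le (f g : T -> R) : Int f -> Int g -> (forall x, f x <= g x) -> mean f <= mean g.
Proof. by move=> fi gi fg; exact: (le_Rintegral measurableT fi gi). Qed.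

Lemma mean_sum (I : Type) (r : seq I) (F : I -> T -> R) : (forall i, Int (F i)) ->
  mean (fun x => \sum_(i <- r) F i x) = \sum_(i <- r) mean (F i).
Proof.
move=> Fi.
have Isum : forall r', Int (fun x => \sum_(i <- r') F i x).
  elim=> [|b r' IH].
    by rewrite (_ : (fun x => _) = fun _ => 0); [exact: Int_cst | apply/funext => x; rewrite big_nil].
  rewrite (_ : (fun x => _) = fun x => F b x + \sum_(i <- r') F i x); first exact: IntD.
  by apply/funext => x; rewrite big_cons.
elim: r => [|a r IH].
  by rewrite big_nil (_ : (fun x => _) = fun _ => 0); [exact: mean_cst | apply/funext => x; rewrite big_nil].
rewrite big_cons -IH -meanD //; congr mean; apply/funext => x; by rewrite big_cons.
Qed.

Definition B (u v : T -> R) := mean (fun x => u x * v x) - mean u * mean v.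

Lemma B_quad (a b : T -> R) m : L2' a -> L2' b ->
  B (fun x => m * a x - b x) (fun x => m * a x - b x) = m ^+ 2 * B a a - 2 * m * B a b + B b b.
Proof.
move=> La Lb.
have Ia := L2_Int La; have Ib := L2_Int Lb; have Iab := L2_IntM La Lb.
have Iaa := L2_IntM La La; have Ibb := L2_IntM Lb Lb.
rewrite /B.
have -> : (fun x => (m * a x - b x) * (m * a x - b x)) =
   (fun x => m ^+ 2 * (a x * a x) + ((-2 * m) * (a x * b x) + b x * b x)).
  by apply/funext => x; ring.
have -> : (fun x => m * a x - b x) = (fun x => m * a x + (-1) * b x).
  by apply/funext => x; ring.
rewrite (meanD (IntZ _ Iaa) (IntD (IntZ _ Iab) Ibb)) (meanD (IntZ _ Iab) Ibb).
rewrite (meanD (IntZ _ Ia) (IntZ _ Ib)) !meanZ //.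
ring.
Qed.

Lemma B_ge0 (w : T -> R) : L2' w -> 0 <= B w w.
Proof.
move=> Lw; have := B_quad 0 Lw Lw.
have -> : B (fun x => 0 * w x - w x) (fun x => 0 * w x - w x) = B w w.
  rewrite /B (_ : (fun x => _) = fun x => w x * w x); last by apply/funext => x; ring.
  rewrite (_ : (fun x => 0 * w x - w x) = fun x => (-1) * w x); last by apply/funext => x; ring.
  by rewrite meanZ; [ring | exact: L2_Int].
move=> _.
have Iw := L2_Int Lw.
have Iww := L2_IntM Lw Lw.
pose c := mean w.
have h : 0 <= mean (fun x => (w x - c) * (w x - c)) by apply: mean_ge0 => x; rewrite -expr2 sqr_ge0.
rewrite (_ : (fun x => (w x - c) * (w x - c)) = fun x => w x * w x + ((-2 * c) * w x + c ^+ 2)) in h; last by apply/funext => x; ring.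
rewrite (meanD Iww (IntD (IntZ _ Iw) (Int_cst _))) (meanD (IntZ _ Iw) (Int_cst _)) meanZ // mean_cst in h.
rewrite expr2 /c in h; rewrite /B; lra.
Qed.

Lemma GCS (X Y Z : R) : 0 <= Y -> (forall m, 2 * m * X <= m ^+ 2 * Y + Z) -> X ^+ 2 <= Y * Z.
Proof.
move=> Y0 h; have [Ye|Yn0] := eqVneq Y 0.
  rewrite Ye in h *.
  have [->|Xn0] := eqVneq X 0; first by rewrite expr0n /= !mul0r.
  have := h ((Z + 1) / (2 * X)).
  have -> : 2 * ((Z + 1) / (2 * X)) * X = Z + 1 by field.
  rewrite mulr0 add0r; lra.
have Yp : 0 < Y by rewrite lt_neqAle eq_sym Yn0.
have := h (X / Y).
have -> : 2 * (X / Y) * X = 2 * (X ^+ 2 / Y) by field.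
have -> : (X / Y) ^+ 2 * Y = X ^+ 2 / Y by field.
move=> hh; have hh' : X ^+ 2 / Y <= Z by lra.
have -> : X ^+ 2 = (X ^+ 2 / Y) * Y by field.
by rewrite [Y * Z]mulrC ler_pM2r.
Qed.

Lemma B_CS (a b : T -> R) : L2' a -> L2' b -> B a b ^+ 2 <= B a a * B b b.
Proof.
move=> La Lb; apply: GCS; first exact: B_ge0.
move=> m; have := B_ge0 (L2D (L2Z m La) (L2Z (-1) Lb)).
rewrite (_ : (fun x => m * a x + -1 * b x) = fun x => m * a x - b x); last by apply/funext => x; ring.
rewrite B_quad //; lra.
Qed.

Lemma B_suml (I : Type) (r : seq I) (c : I -> R) (a : I -> T -> R) (v : T -> R) :
  (forall i, L2' (a i)) -> L2' v ->
  B (fun x => \sum_(i <- r) c i * a i x) v = \sum_(i <- r) c i * B (a i) v.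
Proof.
move=> La Lv; rewrite /B.
rewrite (_ : (fun x => _ * v x) = fun x => \sum_(i <- r) c i * (a i x * v x)); last first.
  by apply/funext => x; rewrite mulr_suml; apply: eq_bigr => i _; rewrite mulrA.
rewrite (@mean_sum _ r (fun i x => c i * (a i x * v x))); last by move=> i; apply: IntZ; apply: L2_IntM.
rewrite (@mean_sum _ r (fun i x => c i * a i x)); last by move=> i; apply: IntZ; apply: L2_Int.
rewrite mulr_suml -sumrB; apply: eq_bigr => i _ /=.
rewrite (meanZ _ (L2_IntM (La i) Lv)) (meanZ _ (L2_Int (La i))); ring.
Qed.


Lemma centered (g : T -> R) : L2' g ->
  (\int[mu]_x (((g x - mean g) ^+ 2)%:E) = (B g g)%:E)%E.
Proof.
move=> Lg; have Ig := L2_Int Lg; have Igg := L2_IntM Lg Lg.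
pose c := mean g.
have Lh : L2' (fun x => g x + (-1) * c) by apply: L2D => //; apply: L2Z; exact: L2_cst.
have Ih : Int (fun x => (g x - c) ^+ 2).
  have := L2_IntM Lh Lh; apply: (eq_integrable measurableT) => x _ /=; congr EFin; ring.
have fin : (\int[mu]_x (((g x - c) ^+ 2)%:E))%E \is a fin_num.
  by case/integrableP: (Ih) => /measurable_EFinP mh; rewrite integral_fin_num_abs.
rewrite -(fineK fin); congr EFin.
rewrite -/(mean (fun x => (g x - c) ^+ 2)).
rewrite (_ : (fun x => (g x - c) ^+ 2) = fun x => g x * g x + ((-2 * c) * g x + c ^+ 2)); last by apply/funext => x; ring.
rewrite (meanD Igg (IntD (IntZ _ Ig) (Int_cst _))) (meanD (IntZ _ Ig) (Int_cst _)) meanZ // mean_cst.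
rewrite /B -/c; ring.
Qed.

End L2gen.



Section Ops.
Context d (T : measurableType d) (R : realType).
Variable mu : {measure set T -> \bar R}.
Hypothesis mu1 : mu setT = 1%E.
Variable s : nat.
Variable Pr : 'I_s -> (T -> R) -> (T -> R).
Hypothesis HL : forall i u, L2' mu u -> L2' mu (Pr i u).
Hypothesis Hsa : forall i u v, L2' mu u -> L2' mu v -> B mu (Pr i u) v = B mu (Pr i u) (Pr i v).
Hypothesis Hc : forall i u, L2' mu u -> B mu (Pr i u) (Pr i u) <= B mu u u.
Hypothesis Hm : forall i u, L2' mu u -> mean mu (Pr i u) = mean mu u.

Definition P (p : 'I_s -> R) (u : T -> R) : T -> R := fun x => \sum_(i < s) p i * Pr i u x.

Lemma B_sym (u v : T -> R) : B mu u v = B mu v u.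
Proof. by rewrite /B mulrC; congr (mean _ _ - _); apply/funext => x; rewrite mulrC. Qed.

Lemma PL p u : L2' mu u -> L2' mu (P p u).
Proof.
move=> Lu; rewrite /P.
have : forall r : seq 'I_s, L2' mu (fun x => \sum_(i <- r) p i * Pr i u x).
  elim=> [|a r IH].
    by rewrite (_ : (fun x => _) = fun _ => 0); [exact: L2_cst | apply/funext => x; rewrite big_nil].
  rewrite (_ : (fun x => _) = fun x => p a * Pr a u x + \sum_(i <- r) p i * Pr i u x).
    by apply: L2D => //; apply: L2Z; exact: HL.
  by apply/funext => x; rewrite big_cons.
by move/(_ (index_enum 'I_s)).
Qed.

Lemma PB p u v : L2' mu u -> L2' mu v ->
  B mu (P p u) v = \sum_(i < s) p i * B mu (Pr i u) (Pr i v).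
Proof.
move=> Lu Lv; rewrite /P (B_suml mu1) //; last by move=> i; exact: HL.
by apply: eq_bigr => i _; rewrite Hsa.
Qed.

Lemma Psa p u v : L2' mu u -> L2' mu v -> B mu (P p u) v = B mu u (P p v).
Proof.
move=> Lu Lv; rewrite [RHS]B_sym !PB //; apply: eq_bigr => i _; by rewrite B_sym.
Qed.

Lemma Pmean p u : \sum_(i < s) p i = 1 -> L2' mu u -> mean mu (P p u) = mean mu u.
Proof.
move=> p1 Lu; rewrite /P (mean_sum mu1 _ (F:=fun i x => p i * Pr i u x)).
  rewrite (eq_bigr (fun i => p i * mean mu u)); first by rewrite -mulr_suml p1 mul1r.
  by move=> i _ /=; rewrite meanZ ?Hm //; apply: (L2_Int mu1); exact: HL.
by move=> i; apply: IntZ; apply: (L2_Int mu1); exact: HL.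
Qed.

Lemma PCS p u w : (forall i, 0 <= p i) -> L2' mu u -> L2' mu w ->
  B mu (P p u) w ^+ 2 <= B mu (P p u) u * B mu (P p w) w.
Proof.
move=> p0 Lu Lw; rewrite !PB //; apply: GCS.
  by apply: sumr_ge0 => i _; apply: mulr_ge0 => //; apply: (B_ge0 mu1); exact: HL.
move=> m; rewrite mulr_sumr mulr_sumr -big_split /=; apply: ler_sum => i _.
have := B_ge0 mu1 (L2D (L2Z m (HL i Lu)) (L2Z (-1) (HL i Lw))).
rewrite (_ : (fun x => m * Pr i u x + -1 * Pr i w x) = fun x => m * Pr i u x - Pr i w x); last by apply/funext => x; ring.
rewrite (B_quad mu1 _ (HL i Lu) (HL i Lw)) => h.
have := p0 i; nra.
Qed.


Definition Pn p n u := iter n (P p) u.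

Lemma PnL p n u : L2' mu u -> L2' mu (Pn p n u).
Proof. by move=> Lu; elim: n => [|n IH] //=; exact: PL. Qed.

Lemma Pnmean p n u : \sum_(i < s) p i = 1 -> L2' mu u -> mean mu (Pn p n u) = mean mu u.
Proof. by move=> p1 Lu; elim: n => [|n IH] //=; rewrite Pmean //; exact: PnL. Qed.

Definition okR p rho := forall u, L2' mu u -> forall r, rho < r ->
  (fun n => r ^- (2 * n) * B mu (Pn p n u) (Pn p n u)) @ \oo --> 0.

Lemma P_ge0 p u : (forall i, 0 <= p i) -> L2' mu u -> 0 <= B mu (P p u) u.
Proof.
move=> p0 Lu; rewrite PB //; apply: sumr_ge0 => i _; apply: mulr_ge0 => //.
apply: (B_ge0 mu1); exact: HL.
Qed.

Lemma P_le1 p u : (forall i, 0 <= p i) -> \sum_(i < s) p i = 1 -> L2' mu u ->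
  B mu (P p u) u <= B mu u u.
Proof.
move=> p0 p1 Lu; rewrite PB // -[X in _ <= X]mul1r -p1 mulr_suml; apply: ler_sum => i _.
by apply: ler_wpM2l => //; exact: Hc.
Qed.

Lemma norm_bound p c : (forall i, 0 <= p i) -> 0 <= c ->
  (forall u, L2' mu u -> B mu (P p u) u <= c * B mu u u) ->
  forall u, L2' mu u -> B mu (P p u) (P p u) <= c ^+ 2 * B mu u u.
Proof.
move=> p0 c0 hc u Lu.
have LPu := PL p Lu.
have X0 := B_ge0 mu1 LPu.
have h1 := PCS p0 Lu LPu.
have a0 := P_ge0 p0 Lu; have a1 := hc u Lu.
have b0 := P_ge0 p0 LPu; have b1 := hc _ LPu.
have u0 := B_ge0 mu1 Lu.
set X := B mu (P p u) (P p u) in X0 h1 b1 *.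
set a := B mu (P p u) u in h1 a0 a1.
set b := B mu (P p (P p u)) (P p u) in h1 b0 b1.
set U := B mu u u in a1 u0 *.
have h2 : X ^+ 2 <= (c * U) * (c * X).
  apply: (le_trans h1); apply: ler_pM => //.
have [->|Xn0] := eqVneq X 0; first by apply: mulr_ge0 => //; exact: sqr_ge0.
have Xp : 0 < X by rewrite lt_neqAle eq_sym Xn0.
rewrite -(ler_pM2r Xp); rewrite expr2 in h2 *; nra.
Qed.

Lemma U_ok p c : (forall i, 0 <= p i) -> 0 <= c ->
  (forall u, L2' mu u -> B mu (P p u) u <= c * B mu u u) ->
  forall rho, c < rho -> okR p rho.
Proof.
move=> p0 c0 hc rho crho u Lu r rr.
have r0 : 0 < r by apply: (le_lt_trans c0); apply: (lt_trans crho).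
have bn : forall n, B mu (Pn p n u) (Pn p n u) <= (c ^+ 2) ^+ n * B mu u u.
  elim=> [|n IH]; first by rewrite expr0 mul1r.
  apply: le_trans (norm_bound p0 c0 hc (PnL p n Lu)) _.
  rewrite [(c ^+ 2) ^+ n.+1]exprS -mulrA; apply: ler_wpM2l; [exact: sqr_ge0 | exact: IH].
apply: (@squeeze_cvgr _ _ _ _ (cst 0) (fun n => B mu u u * ((c / r) ^+ 2) ^+ n)).
- apply: nearW => n; apply/andP; split.
    apply: mulr_ge0; first by rewrite invr_ge0 exprn_ge0 // ltW.
    by apply: (B_ge0 mu1); exact: PnL.
  rewrite mulrC; have -> : ((c / r) ^+ 2) ^+ n = (c ^+ 2) ^+ n / r ^+ (2 * n).
    by rewrite -!exprM expr_div_n.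
  rewrite mulrA [B mu u u * _]mulrC; apply: ler_wpM2r; last exact: bn.
  by rewrite invr_ge0 exprn_ge0 // ltW.
- exact: cvg_cst.
- rewrite -(mulr0 (B mu u u)); apply: cvgMl_tmp; apply: cvg_expr.
  rewrite ger0_norm ?sqr_ge0 // expr_lt1 ?divr_ge0 ?(ltW r0) // ltr_pdivrMr // mul1r.
  exact: (lt_trans crho rr).
Qed.


Lemma Lo_ok p rho : (forall i, 0 <= p i) -> 0 <= rho -> okR p rho ->
  forall u, L2' mu u -> B mu (P p u) u <= rho * B mu u u.
Proof.
move=> p0 rho0 ok u Lu.
pose b n := B mu (Pn p n u) (Pn p n u).
have b0ge : 0 <= b 0%N by apply: (B_ge0 mu1).
have CS1 : B mu (P p u) u ^+ 2 <= b 1%N * b 0%N by apply: (B_CS mu1) => //; exact: PL.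
have [be|bn0] := eqVneq (b 0%N) 0.
  rewrite be mulr0 in CS1; rewrite /b /= in be; rewrite be mulr0.
  have : B mu (P p u) u ^+ 2 <= 0 by [].
  by rewrite expr2 => h; have := P_ge0 p0 Lu; nra.
have bp : 0 < b 0%N by rewrite lt_neqAle eq_sym bn0.
rewrite leNgt; apply/negP => hlt.
set A := B mu (P p u) u in CS1 hlt.
pose a := A / b 0%N.
have arho : rho < a by rewrite /a ltr_pdivlMr //.
pose r := (rho + a) / 2.
have rr : rho < r by rewrite /r; lra.
have ra : r < a by rewrite /r; lra.
have r0 : 0 < r by lra.
pose t := a ^+ 2.
have t1 : t * b 0%N <= b 1%N.
  have e : A = a * b 0%N by rewrite /a mulfVK.
  rewrite -(ler_pM2r bp); move: CS1; rewrite e exprMn [b 0%N ^+ 2]expr2 mulrA.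
  by rewrite /t.
have lc : forall n, b n.+1 ^+ 2 <= b n * b n.+2.
  move=> n; rewrite /b /=.
  have Lw := PnL p n Lu.
  rewrite (Psa p Lw (PL p Lw)).
  by apply: (B_CS mu1) => //; do 2 apply: PL.
have ap : 0 < a by lra.
have tp : 0 < t by rewrite /t exprn_gt0.
have ind : forall n, 0 < b n /\ t * b n <= b n.+1.
  elim=> [|n [bnp hn]]; first by split.
  have b1p : 0 < b n.+1 by apply: lt_le_trans hn; rewrite mulr_gt0.
  split => //.
  rewrite -(ler_pM2l bnp); apply: le_trans (lc n).
  rewrite mulrA (mulrC (b n)) expr2; apply: ler_wpM2r => //; exact: ltW.
have pow : forall n, t ^+ n * b 0%N <= b n.
  elim=> [|n IH]; first by rewrite expr0 mul1r.
  rewrite exprS -mulrA; apply: le_trans (ind n).2.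
  by apply: ler_wpM2l => //; exact: ltW.
have tr : r ^+ 2 <= t by rewrite /t; apply: lerXn2r; rewrite ?nnegrE; exact: ltW.
have cv := ok u Lu r rr.
have : b 0%N <= 0.
  apply: (cvgr_to_ge cv); apply: nearW => n.
  rewrite -[X in X <= _]mul1r -(mulVf (_ : r ^+ (2 * n) != 0)); last by rewrite expf_neq0 // gt_eqF.
  rewrite -mulrA; apply: ler_wpM2l; first by rewrite invr_ge0 exprn_ge0 // ltW.
  apply: le_trans (pow n); apply: ler_wpM2r; first exact: ltW.
  by rewrite exprM; apply: lerXn2r; rewrite ?nnegrE ?exprn_ge0 // ltW.
by rewrite leNgt bp.
Qed.

End Ops.


Section Stat.
Local Open Scope ereal_scope.
Context d (T : measurableType d) (R : realType).
Variable pi : probability T R.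
Variable kk : R.-pker T ~> T.
Hypothesis Hst : forall A, measurable A -> \int[pi]_x kk x A = pi A.

Let stat_indic E (mE : measurable E) :
  \int[pi]_z (\1_E z)%:E = \int[pi]_y (\int[kk y]_z (\1_E z)%:E).
Proof.
rewrite integral_indic// setIT; apply: esym; apply: etrans _ (Hst mE).
by apply: eq_integral => y _; rewrite integral_indic// setIT.
Qed.

Import HBNNSimple.

Let stat_nnsfun (f : {nnsfun T >-> R}) :
  \int[pi]_z (f z)%:E = \int[pi]_y (\int[kk y]_z (f z)%:E).
Proof.
under [in LHS]eq_integral do rewrite fimfunE -fsumEFin//.
rewrite ge0_integral_fsum//; last 2 first.
  - by move=> r; exact/measurable_EFinP/measurableT_comp.
  - by move=> r z _; rewrite EFinM nnfun_muleindic_ge0.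
under [in RHS]eq_integral.
  move=> y _.
  under eq_integral.
    by move=> z _; rewrite fimfunE -fsumEFin//; over.
  rewrite /= ge0_integral_fsum//; last 2 first.
    - by move=> r; exact/measurable_EFinP/measurableT_comp.
    - by move=> r z _; rewrite EFinM nnfun_muleindic_ge0.
  under eq_fsbigr.
    move=> r _.
    rewrite (integralZl_indic _ (fun r => f @^-1` [set r]))//; last first.
      by move=> r0; rewrite preimage_nnfun0.
    rewrite integral_indic// setIT.
    over.
  over.
rewrite /= ge0_integral_fsum//; last 2 first.
  - move=> r; apply: measurable_funeM.
    exact: (measurable_kernel kk (f @^-1` [set r])).
  - move=> n y _.
    have := mulemu_ge0 (fun n => f @^-1` [set n]).
    by apply; exact: preimage_nnfun0.
apply: eq_fsbigr => r _.
rewrite (integralZl_indic _ (fun r => f @^-1` [set r]))//; last first.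
  exact: preimage_nnfun0.
rewrite /= stat_indic//.
have [r0|r0] := leP 0%R r.
  rewrite ge0_integralZl//; last exact: (measurable_kernel kk (f @^-1` [set r])).
  by congr (_ * _); apply: eq_integral => y _; rewrite integral_indic// setIT.
rewrite integral0_eq ?mule0.
  by rewrite integral0_eq// => y _; rewrite preimage_nnfun0// measure0 mule0.
by move=> y _; rewrite integral0_eq// => z _; rewrite preimage_nnfun0// indic0.
Qed.

Lemma stat f : (forall z, 0 <= f z) -> measurable_fun [set: T] f ->
  \int[pi]_y (\int[kk y]_z f z) = \int[pi]_z f z.
Proof.
move=> f0 mf; apply/esym.
pose f_ := nnsfun_approx measurableT mf.
transitivity (\int[pi]_z (lim ((f_ n z)%:E @[n --> \oo]))).
  by apply/eq_integral => z _; apply/esym/cvg_lim => //=; exact: cvg_nnsfun_approx.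
rewrite monotone_convergence//; last 3 first.
  by move=> n; exact/measurable_EFinP.
  by move=> n z _; rewrite lee_fin.
  by move=> z _ a b ab; rewrite lee_fin; exact/lefP/nd_nnsfun_approx.
rewrite (_ : (fun _ => _) =
    (fun n => \int[pi]_y (\int[kk y]_z (f_ n z)%:E)))//; last first.
  by apply/funext => n; rewrite stat_nnsfun.
transitivity (\int[pi]_y lim ((\int[kk y]_z (f_ n z)%:E) @[n --> \oo])).
  rewrite -monotone_convergence//; last 3 first.
  - move=> n; apply: measurable_fun_integral_kernel => //.
    + by move=> U mU; exact: (measurable_kernel kk _ mU).
    + by move=> z; rewrite lee_fin.
    + exact/measurable_EFinP.
  - by move=> n y _; apply: integral_ge0 => // z _; rewrite lee_fin.
  - move=> y _ a b ab; apply: ge0_le_integral => //.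
    + by move=> z _; rewrite lee_fin.
    + exact/measurable_EFinP.
    + exact/measurable_EFinP.
    + by move=> z _; rewrite lee_fin; exact/lefP/nd_nnsfun_approx.
apply: eq_integral => y _; rewrite -monotone_convergence//; last 3 first.
  - by move=> n; exact/measurable_EFinP.
  - by move=> n z _; rewrite lee_fin.
  - by move=> z _ a b ab; rewrite lee_fin; exact/lefP/nd_nnsfun_approx.
by apply: eq_integral => z _; apply/cvg_lim => //; exact: cvg_nnsfun_approx.
Qed.

End Stat.

Section PrSec.
Context d (T : measurableType d) (R : realType).
Variable pi : probability T R.
Variable kk : R.-pker T ~> T.
Hypothesis Hst : forall A, measurable A -> (\int[pi]_x kk x A = pi A)%E.

Definition Pr (u : T -> R) : T -> R := fun x => fine (\int[kk x]_y (u y)%:E)%E.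

Lemma kk1 x : kk x setT = 1%E.
Proof. exact: prob_kernel. Qed.

Lemma int_meas (h : T -> \bar R) : (forall z, 0 <= h z)%E -> measurable_fun setT h ->
  measurable_fun setT (fun x => \int[kk x]_y h y)%E.
Proof.
move=> h0 mh; apply: measurable_fun_integral_kernel => //.
by move=> U mU; exact: (measurable_kernel kk _ mU).
Qed.

Lemma Pr_meas u : measurable_fun setT u -> measurable_fun setT (Pr u).
Proof.
move=> mu; rewrite /Pr.
have -> : (fun x => fine (\int[kk x]_y (u y)%:E)%E) =
   fine \o (fun x => \int[kk x]_y ((EFin \o u)^\+ y) - \int[kk x]_y ((EFin \o u)^\- y))%E.
  by apply/funext => x /=; rewrite integralE.
apply: measurableT_comp; first exact: fine_measurable.
apply: emeasurable_funB; apply: int_meas => //.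
- exact/measurable_funepos/measurable_EFinP.
- exact/measurable_funeneg/measurable_EFinP.
Qed.

Lemma Int_finP (m : {measure set T -> \bar R}) (v : T -> R) : measurable_fun setT v ->
  m.-integrable setT (EFin \o v) <-> (\int[m]_y (v y)%:E)%E \is a fin_num.
Proof.
move=> mv; rewrite -integral_fin_num_abs //; split.
  by move/integrableP => [_].
by move=> h; apply/integrableP; split => //; exact/measurable_EFinP.
Qed.

Lemma fine_integralZ (m : {measure set T -> \bar R}) c (v : T -> R) : measurable_fun setT v ->
  fine (\int[m]_y (c * v y)%:E)%E = c * fine (\int[m]_y (v y)%:E)%E.
Proof.
move=> mv.
have [fv|nfv] := boolP ((\int[m]_y (v y)%:E)%E \is a fin_num).
  have iv := (Int_finP m mv).2 fv.
  under eq_integral do rewrite EFinM.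
  by rewrite integralZl // fineM.
have [->|cn0] := eqVneq c 0.
  by rewrite mul0r; under eq_integral do rewrite mul0r; rewrite integral0.
suff nfc : (\int[m]_y (c * v y)%:E)%E \isn't a fin_num.
  move: nfv nfc; rewrite !fin_numE !negb_and !negbK.
  by move=> /orP[/eqP->|/eqP->] /orP[/eqP->|/eqP->]; rewrite /= mulr0.
apply/negP => fc; move/negP: nfv; apply.
have mcv : measurable_fun setT (fun y => c * v y) by exact: measurable_funM.
have ic := (Int_finP m mcv).2 fc.
apply/(Int_finP m mv).
have := integrableZl measurableT (c^-1) ic.
apply: (eq_integrable measurableT) => y _ /=.
by rewrite -EFinM mulrA mulVf // mul1r.
Qed.


Lemma Pr_sq u x : measurable_fun setT u ->
  (((Pr u x) ^+ 2)%:E <= \int[kk x]_y ((u y) ^+ 2)%:E)%E.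
Proof.
move=> mu.
have [fin|inf] := boolP (\int[kk x]_y ((u y) ^+ 2)%:E < +oo)%E; last first.
  by move: inf; rewrite -leNgt leye_eq => /eqP ->; exact: leey.
have L : L2' (kk x) u by apply/(L2P (kk x)); split.
have := B_ge0 (kk1 x) L; rewrite /B subr_ge0 => h.
have I0 : (0 <= \int[kk x]_y ((u y) ^+ 2)%:E)%E by apply: integral_ge0 => y _; rewrite lee_fin sqr_ge0.
have ff : (\int[kk x]_y ((u y) ^+ 2)%:E)%E \is a fin_num by rewrite ge0_fin_numE.
rewrite -(fineK ff) lee_fin expr2.
apply: (le_trans h); rewrite /mean; apply: le_refl.
Qed.

Lemma Pr_L2 u : L2' pi u -> L2' pi (Pr u) /\
  mean pi (fun x => Pr u x * Pr u x) <= mean pi (fun x => u x * u x).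
Proof.
move=> Lu; have [mu ui] := (L2P pi u).2 Lu.
have mP := Pr_meas mu.
have mP2 : measurable_fun setT (EFin \o (fun x => Pr u x ^+ 2)).
  by apply/measurable_EFinP; exact: measurable_funX.
have mu2 : measurable_fun setT (fun y => ((u y) ^+ 2)%:E).
  by apply/measurable_EFinP; exact: measurable_funX.
have le1 : (\int[pi]_x ((Pr u x) ^+ 2)%:E <= \int[pi]_x (\int[kk x]_y ((u y) ^+ 2)%:E))%E.
  apply: ge0_le_integral => //.
  - by move=> x _; rewrite lee_fin sqr_ge0.
  - by apply: int_meas => // y; rewrite lee_fin sqr_ge0.
  - by move=> x _; exact: Pr_sq.
rewrite stat // in le1; last by move=> y; rewrite lee_fin sqr_ge0.
have LP : L2' pi (Pr u) by apply/(L2P pi); split => //; exact: le_lt_trans ui.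
split => //.
have I0 : (0 <= \int[pi]_x ((Pr u x) ^+ 2)%:E)%E by apply: integral_ge0 => y _; rewrite lee_fin sqr_ge0.
rewrite /mean; apply: fine_le => //.
- by rewrite ge0_fin_numE // (le_lt_trans le1).
- by rewrite ge0_fin_numE // integral_ge0 // => y _; rewrite lee_fin -expr2 sqr_ge0.
Qed.

Lemma Pr_mean w : Int pi w -> mean pi (Pr w) = mean pi w.
Proof.
move=> iw; have mw := Int_meas iw.
pose Ap := (fun x => \int[kk x]_y ((EFin \o w)^\+ y))%E.
pose Am := (fun x => \int[kk x]_y ((EFin \o w)^\- y))%E.
have mAp : measurable_fun setT Ap.
  by apply: int_meas => //; exact/measurable_funepos/measurable_EFinP.
have mAm : measurable_fun setT Am.
  by apply: int_meas => //; exact/measurable_funeneg/measurable_EFinP.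
have sAp : (\int[pi]_x Ap x = \int[pi]_x (EFin \o w)^\+ x)%E.
  by apply: stat => //; exact/measurable_funepos/measurable_EFinP.
have sAm : (\int[pi]_x Am x = \int[pi]_x (EFin \o w)^\- x)%E.
  by apply: stat => //; exact/measurable_funeneg/measurable_EFinP.
have iAp : pi.-integrable setT Ap.
  apply/integrableP; split => //.
  under eq_integral do rewrite gee0_abs ?integral_ge0 //.
  by rewrite sAp; exact: integral_funepos_lt_pinfty.
have iAm : pi.-integrable setT Am.
  apply/integrableP; split => //.
  under eq_integral do rewrite gee0_abs ?integral_ge0 //.
  by rewrite sAm; exact: integral_funeneg_lt_pinfty.
have iB := integrableB measurableT iAp iAm.
have e : (\int[pi]_x (Pr w x)%:E = \int[pi]_x (Ap \- Am) x)%E.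
  apply: ae_eq_integral => //.
  - exact/measurable_EFinP/Pr_meas.
  - exact: emeasurable_funB.
  apply: filterS (integrable_ae measurableT iB) => x h _.
  rewrite /Pr integralE fineK //; exact: h.
rewrite /mean e integralB // sAp sAm -integralE.
done.
Qed.

Section Sat.
Variable S : T -> set T.
Hypothesis hSm : forall x, measurable (S x).
Hypothesis hS1 : forall x, kk x (S x) = 1%E.
Hypothesis hSeq : forall x y, S x y -> forall A, measurable A -> kk x A = kk y A.

Lemma Pr_sat u x y : S x y -> Pr u y = Pr u x.
Proof.
move=> Sxy; rewrite /Pr (eq_measure_integral (kk x)) // => A mA _.
by rewrite (hSeq Sxy mA).
Qed.

Lemma pullout (a v : T -> R) x : (forall x y, S x y -> a y = a x) ->
  measurable_fun setT a -> measurable_fun setT v ->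
  Pr (fun y => a y * v y) x = a x * Pr v x.
Proof.
move=> asat ma mv; rewrite /Pr.
have -> : (\int[kk x]_y (a y * v y)%:E = \int[kk x]_y (a x * v y)%:E)%E.
  apply: ae_eq_integral => //.
  - by apply/measurable_EFinP; exact: measurable_funM.
  - by apply/measurable_EFinP; apply: measurable_funM => //; exact: measurable_cst.
  exists (~` S x); split.
  - exact: measurableC.
  - rewrite -setTD measureD // ?setTI; last first.
      by rewrite [X in (X < _)%E](_ : _ = 1%E) ?ltry //; exact: kk1.
    rewrite [X in (X - _)%E](_ : _ = 1%E); last exact: kk1.
    by rewrite [X in (_ - X)%E](_ : _ = 1%E) ?subee //; exact: hS1.
  - move=> y /= hn Sy; apply: hn => _; by rewrite (asat _ _ Sy).
by rewrite fine_integralZ.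
Qed.


Lemma HmPr u : L2' pi u -> mean pi (Pr u) = mean pi u.
Proof. by move=> Lu; apply: Pr_mean; exact: (L2_Int (probability_setT pi)). Qed.

Lemma HLPr u : L2' pi u -> L2' pi (Pr u).
Proof. by move=> Lu; case: (Pr_L2 Lu). Qed.

Lemma HcPr u : L2' pi u -> B pi (Pr u) (Pr u) <= B pi u u.
Proof.
move=> Lu; rewrite /B HmPr //; rewrite lerD2r; exact: (Pr_L2 Lu).2.
Qed.

Lemma HsaPr u v : L2' pi u -> L2' pi v -> B pi (Pr u) v = B pi (Pr u) (Pr v).
Proof.
move=> Lu Lv; rewrite /B [mean pi (Pr v)]HmPr //; congr (_ - _).
have LP := HLPr Lu.
rewrite -Pr_mean; last exact: (L2_IntM LP Lv).
congr (mean pi _); apply/funext => x.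
apply: pullout => //.
- by move=> x0 y Sxy; exact: Pr_sat.
- by case: Lu => mu _; exact: Pr_meas.
- by case: Lv.
Qed.
End Sat.
End PrSec.


Section Main.
Context (R : realType) (dd s : nat) (blk : 'I_dd -> 'I_s)
  (pi : probability (dd.-tuple R) R)
  (k : 'I_s -> R.-pker (dd.-tuple R) ~> (dd.-tuple R)).
Hypothesis Hfc : forall i, full_conditional_kernel blk pi i (k i).

Let mu1 : pi setT = 1%E := probability_setT pi.

Lemma Hst_i i A : measurable A -> (\int[pi]_x k i x A = pi A)%E.
Proof.
move=> mA; case: (Hfc i) => _ _ /(_ A setT mA) h.
have := h (conj measurableT (fun _ _ _ => conj id id)); rewrite setIT; exact.
Qed.

Lemma S_meas i (x : dd.-tuple R) : measurable [set y | same_off_block blk i x y].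
Proof.
pose F n : set (dd.-tuple R) := if (n < dd)%N =P true is ReflectT H then
   (if blk (Ordinal H) != i then [set y | tnth y (Ordinal H) = tnth x (Ordinal H)] else setT) else setT.
have -> : [set y | same_off_block blk i x y] = \bigcap_(n in setT) F n.
  apply/seteqP; split => y /=.
    move=> h n _; rewrite /F; case: eqP => // H; case: ifPn => // hb; exact: h.
  move=> h j hb; have := h (nat_of_ord j) Logic.I; rewrite /F.
  case: eqP => [H|]; last by rewrite ltn_ord.
  by rewrite (_ : Ordinal H = j) ?hb //; apply: val_inj.
apply: bigcap_measurableType => n _; rewrite /F; case: eqP => // H; case: ifPn => // _.
have := measurable_tnth (Ordinal H) measurableT (measurable_set1 (tnth x (Ordinal H))).
by rewrite setTI.
Qed.


Let Pri (i : 'I_s) := Pr (k i).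
Let S i (x : dd.-tuple R) := [set y | same_off_block blk i x y].
Let hS1 i x : k i x (S i x) = 1%E.
Proof. by case: (Hfc i). Qed.
Let hSeq i x y : S i x y -> forall A, measurable A -> k i x A = k i y A.
Proof. by case: (Hfc i) => _ h _; exact: h. Qed.

Let HL : forall i u, L2' pi u -> L2' pi (Pri i u).
Proof. by move=> i u Lu; exact: (HLPr (Hst_i i) Lu). Qed.
Let Hsa : forall i u v, L2' pi u -> L2' pi v -> B pi (Pri i u) v = B pi (Pri i u) (Pri i v).
Proof. by move=> i u v Lu Lv; exact: (HsaPr (Hst_i i) (@S_meas i) (hS1 i) (@hSeq i) Lu Lv). Qed.
Let Hc : forall i u, L2' pi u -> B pi (Pri i u) (Pri i u) <= B pi u u.
Proof. by move=> i u Lu; exact: (HcPr (Hst_i i) Lu). Qed.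
Let Hm : forall i u, L2' pi u -> mean pi (Pri i u) = mean pi u.
Proof. by move=> i u Lu; exact: (HmPr (Hst_i i) Lu). Qed.

Lemma link p rho : \sum_(i < s) p i = 1 ->
  (L2_rate_ok pi k p rho <-> okR pi Pri p rho).
Proof.
move=> p1.
have key : forall f, L2' pi f -> forall r n,
  ((r ^- (2 * n))%:E * \int[pi]_x (((iter n (rsgs_op k p) f x - pi_mean pi f) ^+ 2)%:E))%E =
  (r ^- (2 * n) * B pi (Pn Pri p n f) (Pn Pri p n f))%:E.
  move=> f Lf r n.
  have -> : pi_mean pi f = mean pi (Pn Pri p n f) by rewrite (Pnmean mu1 HL Hm) //.
  by rewrite EFinM -(centered mu1 (PnL mu1 HL p n Lf)).
split => h u Lu r rr.
  have := h u ((L2P pi u).2 Lu) r rr.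
  rewrite (_ : (fun n => _) = (fun n => (r ^- (2 * n) * B pi (Pn Pri p n u) (Pn Pri p n u))%:E)); last first.
    by apply/funext => n; rewrite key.
  by move/fine_cvgP => [_].
have Lu' := (L2P pi u).1 Lu.
rewrite (_ : (fun n => _) = (fun n => (r ^- (2 * n) * B pi (Pn Pri p n u) (Pn Pri p n u))%:E)); last first.
  by apply/funext => n; rewrite key.
apply/fine_cvgP; split; first exact: nearW.
exact: h.
Qed.


Let Sp (p : 'I_s -> R) := [set rho : R | 0 < rho /\ L2_rate_ok pi k p rho].

Let p0of (p : 'I_s -> R) : pos_prob_vector p -> forall i, 0 <= p i.
Proof. by case=> h _ i; exact: ltW. Qed.

Lemma Sp_ok (p : 'I_s -> R) : pos_prob_vector p -> forall c, 0 <= c ->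
  (forall u, L2' pi u -> B pi (P Pri p u) u <= c * B pi u u) ->
  forall rho, c < rho -> Sp p rho.
Proof.
move=> pp c c0 hc rho crho; split; first exact: le_lt_trans crho.
apply/(link rho pp.2).
exact: (U_ok mu1 HL Hsa (p0of pp) c0 hc crho).
Qed.

Let le1 (p : 'I_s -> R) : pos_prob_vector p -> forall u, L2' pi u -> B pi (P Pri p u) u <= 1 * B pi u u.
Proof. by move=> pp u Lu; rewrite mul1r; exact: (P_le1 mu1 HL Hsa Hc (p0of pp) pp.2 Lu). Qed.

Let Sp2 (p : 'I_s -> R) : pos_prob_vector p -> Sp p 2.
Proof. by move=> pp; apply: (Sp_ok pp ler01 (le1 pp)); lra. Qed.

Let Sp_lb (p : 'I_s -> R) : has_lbound (Sp p).
Proof. by exists 0 => x [x0 _]; exact: ltW. Qed.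

Lemma rate_ub (p : 'I_s -> R) c : pos_prob_vector p -> 0 <= c ->
  (forall u, L2' pi u -> B pi (P Pri p u) u <= c * B pi u u) -> L2_rate pi k p <= c.
Proof.
move=> pp c0 hc; apply/ler_addgt0Pr => e e0.
apply: (ge_inf (Sp_lb p)); apply: (Sp_ok pp c0 hc); lra.
Qed.

Lemma rate_ge0 (p : 'I_s -> R) : pos_prob_vector p -> 0 <= L2_rate pi k p.
Proof.
move=> pp; apply: lb_le_inf; first by exists 2; exact: Sp2.
by move=> x [x0 _]; exact: ltW.
Qed.

Lemma rate_lo (p : 'I_s -> R) : pos_prob_vector p -> forall u, L2' pi u ->
  B pi (P Pri p u) u <= L2_rate pi k p * B pi u u.
Proof.
move=> pp u Lu.
have lo : forall rho, Sp p rho -> B pi (P Pri p u) u <= rho * B pi u u.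
  move=> rho [rho0 ok]; apply: (Lo_ok mu1 HL Hsa (p0of pp) (ltW rho0)) => //.
  exact/(link rho pp.2).
have [be|bn0] := eqVneq (B pi u u) 0.
  by rewrite be mulr0; have := lo 2 (Sp2 pp); rewrite be mulr0.
have bp : 0 < B pi u u by rewrite lt_neqAle eq_sym bn0 (B_ge0 mu1).
rewrite -ler_pdivrMr //; apply: lb_le_inf; first by exists 2; exact: Sp2.
by move=> rho Srho; rewrite ler_pdivrMr //; exact: lo.
Qed.


Lemma main_ineq (p q : 'I_s -> R) : pos_prob_vector p -> pos_prob_vector q ->
  Gap pi k p <= (\big[Num.max/0]_(i < s) (p i / q i)) * Gap pi k q.
Proof.
move=> pp pq.
set M := \big[Num.max/0]_(i < s) (p i / q i).
have pM : forall i, p i <= M * q i.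
  move=> i; have h : p i / q i <= M by rewrite /M; exact: le_bigmax.
  by rewrite ler_pdivrMr ?pq.1 // mulrC in h.
have M1 : 1 <= M.
  rewrite -pp.2 -[M]mulr1 -pq.2 mulr_sumr; apply: ler_sum => i _; exact: pM.
have Mp : 0 < M by lra.
set rp := L2_rate pi k p; set rq := L2_rate pi k q.
have rp0 : 0 <= rp := rate_ge0 pp.
set w := (1 - rp) / M.
have wM : w * M = 1 - rp by rewrite /w mulfVK // gt_eqF.
have w1 : w <= 1.
  rewrite leNgt; apply/negP => w1.
  have : w * 1 <= w * M by rewrite ler_wpM2l //; lra.
  lra.
have c0 : 0 <= 1 - w by lra.
have hc : forall u, L2' pi u -> B pi (P Pri q u) u <= (1 - w) * B pi u u.
  move=> u Lu.
  have lp := rate_lo pp Lu.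
  rewrite (PB mu1 HL Hsa p Lu Lu) in lp; rewrite (PB mu1 HL Hsa q Lu Lu).
  set U := B pi u u in lp *.
  have e0 : forall i, 0 <= U - B pi (Pri i u) (Pri i u) by move=> i; rewrite subr_ge0; exact: Hc.
  have sp : U - \sum_(i < s) p i * B pi (Pri i u) (Pri i u) = \sum_(i < s) p i * (U - B pi (Pri i u) (Pri i u)).
    rewrite [RHS](eq_bigr (fun i => p i * U - p i * B pi (Pri i u) (Pri i u))); last by move=> i _; rewrite mulrBr.
    by rewrite sumrB -mulr_suml pp.2 mul1r.
  have sq : U - \sum_(i < s) q i * B pi (Pri i u) (Pri i u) = \sum_(i < s) q i * (U - B pi (Pri i u) (Pri i u)).
    rewrite [RHS](eq_bigr (fun i => q i * U - q i * B pi (Pri i u) (Pri i u))); last by move=> i _; rewrite mulrBr.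
    by rewrite sumrB -mulr_suml pq.2 mul1r.
  have le : \sum_(i < s) p i * (U - B pi (Pri i u) (Pri i u)) <= M * \sum_(i < s) q i * (U - B pi (Pri i u) (Pri i u)).
    rewrite mulr_sumr; apply: ler_sum => i _; rewrite mulrA; apply: ler_wpM2r => //; exact: pM.
  rewrite -sp -sq in le.
  set X := \sum_(i < s) p i * _ in lp le.
  set Y := \sum_(i < s) q i * _ in le *.
  have h1 : w * M * U <= M * (U - Y) by rewrite wM; lra.
  rewrite -(ler_pM2l Mp); rewrite -(ler_pM2l Mp) in h1 *.
  nra.
have rq_le : rq <= 1 - w := rate_ub pq c0 hc.
rewrite /Gap -/rp -/rq -wM [w * M]mulrC; apply: ler_wpM2l; first exact: ltW.
by rewrite lerBrDr addrC -lerBrDr.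
Qed.

End Main.

Theorem theorem4 (R : realType) (d s : nat) (blk : 'I_d -> 'I_s)
  (pi : probability (d.-tuple R) R)
  (k : 'I_s -> R.-pker (d.-tuple R) ~> (d.-tuple R)) :
  (forall i : 'I_s, exists j : 'I_d, blk j = i) ->
  (forall i : 'I_s, full_conditional_kernel blk pi i (k i)) ->
  forall p : 'I_s -> R, pos_prob_vector p ->
    (forall q : 'I_s -> R, pos_prob_vector q ->
       Gap pi k p <= (\big[Num.max/0]_(i < s) (p i / q i)) * Gap pi k q) /\
    Gap pi k p <= (\big[Num.max/0]_(i < s) ((s%:R : R) * p i))
                  * Gap pi k (@uniform_vector R s).
Proof.
move=> _ Hfc p pp; split.
  by move=> q pq; exact: main_ineq.
have s0 : (0 < s)%N.
  case: (pickP (@predT 'I_s)) => [i0 _|h]; first exact: (leq_ltn_trans (leq0n i0) (ltn_ord i0)).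
  have := pp.2; rewrite big_pred0 // => /esym/eqP; rewrite oner_eq0.
  done.
have sR : (s%:R : R) != 0 by rewrite pnatr_eq0 -lt0n.
have pu : pos_prob_vector (@uniform_vector R s).
  split; first by move=> i; rewrite /uniform_vector invr_gt0 ltr0n.
  by rewrite /uniform_vector sumr_const card_ord -[X in X = 1](mulr_natl (s%:R^-1) s) mulfV.
have := main_ineq Hfc pp pu.
by rewrite (eq_bigr (fun i => (s%:R : R) * p i)) // => i _; rewrite /uniform_vector invrK mulrC.
Qed.
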